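(* Let $(X,\mathcal{A},p)$ be a standard Borel probability space, and let $(e_\lambda)_{\lambda\in\Lambda}$ and $(f_\lambda)_{\lambda\in\Lambda}$ be nets (indexed by the same directed set) of measure-preserving, $p$-a.s. idempotent Markov kernels on $(X,\mathcal{A},p)$, converging in the one-sided topology to kernels $e$ and $f$ respectively. If $e_\lambda\le f_\lambda$ for all $\lambda$, then $e\le f$.
   Context: Kernels are identified up to $p$-a.s. equality; composition $(h\circ k)(C\mid x)=\int h(C\mid y)k(dy\mid x)$; $e$ is a.s. idempotent if $e\circ e=e$ a.s. Order: $e\le f$ iff $e\circ f=f\circ e=e$ a.s. One-sided topology: $k_\lambda\to k$ iff $\int_X|k(B\mid x)-k_\lambda(B\mid x)|\,p(dx)\to0$ for every $B\in\mathcal{A}$. *)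

(* Defs.v *)
From HB Require Import structures.
From mathcomp Require Import all_boot all_order all_algebra.
From mathcomp Require Import all_classical all_reals all_analysis.
Set Implicit Arguments. Unset Strict Implicit. Unset Printing Implicit Defensive.
Import Order.TTheory GRing.Theory Num.Theory.
Local Open Scope classical_set_scope.
Local Open Scope ring_scope.

Definition is_metric (R : realType) (X : Type) (dist : X -> X -> R) : Prop :=
  [/\ forall x y, 0 <= dist x y,
      forall x y, dist x y = 0 <-> x = y,
      forall x y, dist x y = dist y x &
      forall x y z, dist x z <= dist x y + dist y z].

Definition metric_open (R : realType) (X : Type) (dist : X -> X -> R) (U : set X) :=
  forall x, U x -> exists2 eps : R, 0 < eps & [set y | dist x y < eps] `<=` U.

Definition metric_complete (R : realType) (X : Type) (dist : X -> X -> R) :=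
  forall u : nat -> X,
    (forall eps : R, 0 < eps -> exists N, forall m n, (N <= m)%N -> (N <= n)%N ->
        dist (u m) (u n) < eps) ->
    exists x, forall eps : R, 0 < eps -> exists N, forall n, (N <= n)%N -> dist (u n) x < eps.

Definition metric_separable (R : realType) (X : Type) (dist : X -> X -> R) :=
  exists D : set X, countable D /\
    forall x (eps : R), 0 < eps -> exists2 y, D y & dist x y < eps.

Definition standard_borel (R : realType) d (X : measurableType d) : Prop :=
  exists dist : X -> X -> R,
    [/\ is_metric dist, metric_complete dist, metric_separable dist &
        @measurable d X = <<s metric_open dist >>].

Local Open Scope ereal_scope.

Definition kcompose (R : realType) d (X : measurableType d)
  (h k : X -> {measure set X -> \bar R}) : X -> set X -> \bar R :=
  fun x C => \int[k x]_y h y C.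

Definition kae_eq (R : realType) d (X : measurableType d)
  (p : probability X R) (k h : X -> set X -> \bar R) : Prop :=
  forall C : set X, measurable C -> {ae p, forall x, k x C = h x C}.

Definition kmeasure_preserving (R : realType) d (X : measurableType d)
  (p : probability X R) (k : R.-pker X ~> X) : Prop :=
  forall B : set X, measurable B -> \int[p]_x k x B = p B.

Definition kidempotent (R : realType) d (X : measurableType d)
  (p : probability X R) (e : R.-pker X ~> X) : Prop :=
  kae_eq p (kcompose e e) (fun x C => e x C).

Definition kle (R : realType) d (X : measurableType d)
  (p : probability X R) (e f : R.-pker X ~> X) : Prop :=
  kae_eq p (kcompose e f) (fun x C => e x C) /\
  kae_eq p (kcompose f e) (fun x C => e x C).

Definition directed_set (L : Type) (le : L -> L -> Prop) : Prop :=
  [/\ inhabited L, (forall l, le l l),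
      (forall a b c, le a b -> le b c -> le a c) &
      (forall a b, exists c, le a c /\ le b c)].

Definition onesided_cvg (R : realType) d (X : measurableType d)
  (p : probability X R) (L : Type) (le : L -> L -> Prop)
  (kl : L -> R.-pker X ~> X) (k : R.-pker X ~> X) : Prop :=
  forall B : set X, measurable B ->
    forall eps : R, (0 < eps)%R -> exists l0, forall l, le l0 l ->
      \int[p]_x `| k x B - kl l x B | < eps%:E.

(* Main.v *)
Require Import Defs.
From HB Require Import structures.
From mathcomp Require Import all_boot all_order all_algebra.
From mathcomp Require Import all_classical all_reals all_analysis.
From mathcomp Require Import zify lra.
Set Implicit Arguments. Unset Strict Implicit. Unset Printing Implicit Defensive.
Import Order.TTheory GRing.Theory Num.Theory.
Import measurable_realfun.
Local Open Scope classical_set_scope.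
Local Open Scope ring_scope.


Lemma sum_ind (R : realType) (n m : nat) :
  \sum_(j < n) ((j.+1 <= m)%N)%:R = (minn m n)%:R :> R.
Proof.
elim: n => [|n IH]; first by rewrite big_ord0 minn0.
rewrite big_ord_recr /= IH -natrD; congr (_%:R).
by case: leqP => H /=; lia.
Qed.

Definition sapp (R : realType) (n : nat) (u : R) :=
  \sum_(j < n) (n%:R^-1 : R) * ((j.+1%:R / n%:R <= u)%R : bool)%:R.

Lemma approx_pt (R : realType) (n : nat) (u : R) : (0 < n)%N -> 0 <= u <= 1 ->
  sapp n u <= u <= sapp n u + n%:R^-1.
Proof.
move=> n0 /andP[u0 u1]; rewrite /sapp; set s := \sum_(j < n) _.
have n0R : (0 : R) < n%:R by rewrite ltr0n.
have un0 : 0 <= u * n%:R by rewrite mulr_ge0.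
set m := Num.truncn (u * n%:R).
have Hs : s = n%:R^-1 * m%:R.
  rewrite /s -mulr_sumr; congr (_ * _).
  rewrite -[RHS](_ : (minn m n)%:R = m%:R); last first.
    congr (_%:R); apply/minn_idPl.
    rewrite truncn_le_nat; apply: (le_lt_trans (y := n%:R)).
      by rewrite -[leRHS]mul1r ler_wpM2r// ltW.
    by rewrite ltr_nat.
  rewrite -sum_ind; apply: eq_bigr => j _; congr (_%:R).
  by rewrite truncn_ge_nat// ler_pdivrMr.
have := truncn_itv un0; rewrite -/m => /andP[m1 m2].
rewrite Hs; apply/andP; split.
  by rewrite mulrC ler_pdivrMr// mulrC.
rewrite (_ : _ + _ = m.+1%:R / n%:R); last by rewrite -natr1 mulrDl mul1r mulrC.
by rewrite ler_pdivlMr// ltW.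
Qed.


Section approx.
Context (R : realType) (d : measure_display) (X : measurableType d).
Implicit Types phi : X -> R.

Lemma mu_fin (mu : {measure set X -> \bar R}) (mu1 : mu setT = 1%E) B :
  measurable B -> mu B = (fine (mu B))%:E /\ 0 <= fine (mu B) <= 1.
Proof.
move=> mB.
have h0 : (0 <= mu B)%E by exact: measure_ge0.
have h1 : (mu B <= 1)%E.
  rewrite -mu1; apply: le_measure => //; rewrite inE//.
have fin : mu B \is a fin_num by rewrite ge0_fin_numE// (le_lt_trans h1)// ltry.
split; first by rewrite fineK.
by rewrite -lee_fin -lee_fin fineK// h0 h1.
Qed.

Definition Bset (n : nat) (phi : X -> R) (j : nat) :=
  phi @^-1` [set v | j.+1%:R / n%:R <= v].

Lemma mBset n phi j : measurable_fun setT phi -> measurable (Bset n phi j).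
Proof.
move=> mphi.
have := mphi measurableT `[(j.+1%:R / n%:R : R)%R, +oo[%classic (measurable_itv _).
rewrite setTI /Bset.
rewrite (_ : [set v | j.+1%:R / n%:R <= v] = `[(j.+1%:R / n%:R : R)%R, +oo[%classic) //.
by apply/seteqP; split=> v /=; rewrite in_itv/= andbT.
Qed.

Lemma sapp_indicR n phi y :
  sapp n (phi y) = \sum_(j < n) n%:R^-1 * \1_(Bset n phi j) y.
Proof.
rewrite /sapp; apply: eq_bigr => j _.
rewrite indicE /Bset.
have -> : (y \in phi @^-1` [set v | j.+1%:R / n%:R <= v]) = (j.+1%:R / n%:R <= phi y).
  by apply/idP/idP => [/set_mem//|H]; exact: mem_set.
by [].
Qed.

Lemma msapp n phi : measurable_fun setT phi ->
  measurable_fun setT (fun y => sapp n (phi y)).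
Proof.
move=> mphi; rewrite (_ : (fun y => _) = (fun y => \sum_(j < n) n%:R^-1 * \1_(Bset n phi j) y)); last first.
  by apply/funext => y; rewrite sapp_indicR.
apply: measurable_sum => j; apply: measurable_funM => //.
exact/measurable_indic/mBset.
Qed.

Lemma sapp_indic n phi y :
  (sapp n (phi y))%:E = (\sum_(j < n) (n%:R^-1)%:E * (\1_(Bset n phi j) y)%:E)%E.
Proof.
rewrite sumEFin /sapp; congr (_%:E); apply: eq_bigr => j _.
rewrite indicE /Bset.
have -> : (y \in phi @^-1` [set v | j.+1%:R / n%:R <= v]) = (j.+1%:R / n%:R <= phi y).
  by apply/idP/idP => [/set_mem//|H]; exact: mem_set.
by [].
Qed.

Lemma int_sapp (mu : {measure set X -> \bar R}) n phi :
  measurable_fun setT phi ->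
  (\int[mu]_y (sapp n (phi y))%:E = \sum_(j < n) (n%:R^-1)%:E * mu (Bset n phi j))%E.
Proof.
move=> mphi.
under eq_integral => y _ do rewrite sapp_indic.
rewrite ge0_integral_sum; last 3 first.
- by [].
- move=> j; apply/measurable_EFinP.
  apply: measurable_funM => //; exact/measurable_indic/mBset.
- by move=> j y _; rewrite -EFinM lee_fin mulr_ge0.
apply: eq_bigr => j _.
rewrite ge0_integralZl; last 4 first.
- by [].
- by apply/measurable_EFinP; exact/measurable_indic/mBset.
- by move=> y _; rewrite lee_fin.
- by rewrite lee_fin.
by rewrite integral_indic ?setIT//; exact: mBset.
Qed.


Definition Sr (mu : {measure set X -> \bar R}) n phi :=
  \sum_(j < n) n%:R^-1 * fine (mu (Bset n phi j)).

Lemma approx_meas (mu : {measure set X -> \bar R}) (mu1 : mu setT = 1%E) n phi :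
  measurable_fun setT phi -> (forall y, 0 <= phi y <= 1) -> (0 < n)%N ->
  and ((\int[mu]_y (phi y)%:E)%E = (fine (\int[mu]_y (phi y)%:E)%E)%:E)
  (Sr mu n phi <= fine (\int[mu]_y (phi y)%:E)%E <= Sr mu n phi + n%:R^-1).
Proof.
move=> mphi phi01 n0.
have mphiE : measurable_fun setT (fun y => (phi y)%:E) by apply/measurable_EFinP.
have msE : measurable_fun setT (fun y => (sapp n (phi y))%:E).
  by apply/measurable_EFinP; exact: msapp.
have hS : (\int[mu]_y (sapp n (phi y))%:E = (Sr mu n phi)%:E)%E.
  rewrite int_sapp// /Sr -sumEFin; apply: eq_bigr => j _.
  by rewrite EFinM -(mu_fin mu1 (mBset n j mphi)).1.
have s0 y : 0 <= sapp n (phi y).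
  by rewrite /sapp; apply: sumr_ge0 => j _; rewrite mulr_ge0.
have h1 : (\int[mu]_y (sapp n (phi y))%:E <= \int[mu]_y (phi y)%:E)%E.
  apply: ge0_le_integral => //.
  - by move=> y _; rewrite lee_fin.
  - by move=> y _; rewrite lee_fin; have /andP[] := approx_pt n0 (phi01 y).
have h2 : (\int[mu]_y (phi y)%:E <= \int[mu]_y ((sapp n (phi y))%:E + (n%:R^-1)%:E))%E.
  apply: ge0_le_integral => //.
  - by move=> y _; rewrite lee_fin; have /andP[] := phi01 y.
  - by apply: emeasurable_funD => //; exact: measurable_cst.
  - by move=> y _; rewrite -EFinD lee_fin; have /andP[] := approx_pt n0 (phi01 y).
rewrite ge0_integralD in h2; last 5 first.
- by [].
- by move=> y _; rewrite lee_fin.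
- by [].
- by move=> y _; rewrite lee_fin.
- exact: measurable_cst.
rewrite integral_cst// mu1 mule1 hS in h2.
rewrite hS in h1.
have fin : (\int[mu]_y (phi y)%:E)%E \is a fin_num.
  have i0 : (0 <= \int[mu]_y (phi y)%:E)%E.
    by apply: integral_ge0 => y _; rewrite lee_fin; have /andP[] := phi01 y.
  by rewrite ge0_fin_numE// (le_lt_trans h2)// -EFinD ltry.
split; first by rewrite fineK.
by rewrite -!lee_fin fineK// h1 EFinD h2.
Qed.


Lemma approx_diff (mu nu : {measure set X -> \bar R}) (mu1 : mu setT = 1%E)
  (nu1 : nu setT = 1%E) n phi :
  measurable_fun setT phi -> (forall y, 0 <= phi y <= 1) -> (0 < n)%N ->
  `|fine (\int[mu]_y (phi y)%:E)%E - fine (\int[nu]_y (phi y)%:E)%E| <=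
  n%:R^-1 + \sum_(j < n) n%:R^-1 *
     `|fine (mu (Bset n phi j)) - fine (nu (Bset n phi j))|.
Proof.
move=> mphi phi01 n0.
have [_ /andP[a1 a2]] := approx_meas mu1 mphi phi01 n0.
have [_ /andP[b1 b2]] := approx_meas nu1 mphi phi01 n0.
have hT : `|Sr mu n phi - Sr nu n phi| <= \sum_(j < n) n%:R^-1 *
     `|fine (mu (Bset n phi j)) - fine (nu (Bset n phi j))|.
  rewrite /Sr -sumrB; apply: le_trans (ler_norm_sum _ _ _) _.
  apply: ler_sum => j _; rewrite -mulrBr normrM ger0_norm// invr_ge0.
move: hT a1 a2 b1 b2.
set T := \sum_(j < n) _.
set a := fine _; set b := fine _; set sa := Sr mu n phi; set sb := Sr nu n phi.
move=> hT a1 a2 b1 b2.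
have e1 := ler_norm (sa - sb); have e2 := ler_norm (sb - sa).
rewrite distrC in e2.
rewrite ler_norml; apply/andP; split; lra.
Qed.

End approx.


Section net.
Context (L : Type) (le : L -> L -> Prop) (dir : directed_set le).

Lemma ev2 (P Q : L -> Prop) :
  (exists l0, forall l, le l0 l -> P l) -> (exists l0, forall l, le l0 l -> Q l) ->
  exists l0, forall l, le l0 l -> P l /\ Q l.
Proof.
case: dir => _ _ tr up [a Ha] [b Hb].
have [c [ac bc]] := up a b.
by exists c => l cl; split; [apply: Ha; apply: tr ac cl|apply: Hb; apply: tr bc cl].
Qed.

Lemma ev_fin (n : nat) (P : nat -> L -> Prop) :
  (forall j, (j < n)%N -> exists l0, forall l, le l0 l -> P j l) ->
  exists l0, forall l, le l0 l -> forall j, (j < n)%N -> P j l.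
Proof.
elim: n => [|n IH] H.
  by case: dir => -[l0] _ _ _; exists l0 => l _ j.
have [l1 H1] : exists l0, forall l, le l0 l -> forall j, (j < n)%N -> P j l.
  by apply: IH => j jn; apply: H; lia.
have [l2 H2] := H n (ltnSn n).
have [l0 H0] := ev2 (ex_intro _ l1 H1) (ex_intro _ l2 H2).
exists l0 => l ll j jn.
have [A B] := H0 l ll.
have [jn'|->] : (j < n)%N \/ j = n by lia.
  exact: A.
exact: B.
Qed.

End net.

Section kern.
Context (R : realType) (d : measure_display) (X : measurableType d).

Lemma mfk (k : R.-pker X ~> X) B : measurable B ->
  measurable_fun setT (fun x => fine (k x B)).
Proof.
move=> mB; apply: measurableT_comp; first exact: fine_measurable.
exact: measurable_kernel.
Qed.

Lemma mint (k : R.-pker X ~> X) (f : X -> \bar R) :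
  (forall y, (0 <= f y)%E) -> measurable_fun setT f ->
  measurable_fun setT (fun x => \int[k x]_y f y)%E.
Proof.
move=> f0 mf; apply: measurable_fun_integral_kernel => //.
by move=> U mU; exact: measurable_kernel.
Qed.

Lemma mfint (k : R.-pker X ~> X) (f : X -> \bar R) :
  (forall y, (0 <= f y)%E) -> measurable_fun setT f ->
  measurable_fun setT (fun x => fine (\int[k x]_y f y)%E).
Proof.
move=> f0 mf; apply: measurableT_comp; first exact: fine_measurable.
exact: mint.
Qed.

Lemma kfin (k : R.-pker X ~> X) x B : measurable B ->
  k x B = (fine (k x B))%:E /\ 0 <= fine (k x B) <= 1.
Proof. by move=> mB; apply: mu_fin => //; exact: prob_kernel. Qed.

End kern.


Section conv.
Context (R : realType) (d : measure_display) (X : measurableType d)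
  (p : probability X R) (L : Type) (le : L -> L -> Prop) (dir : directed_set le).

Lemma absfine (k k' : R.-pker X ~> X) x B : measurable B ->
  (`|fine (k x B) - fine (k' x B)|)%:E = `|(k x B - k' x B)%E|%E.
Proof.
move=> mB; rewrite [in RHS](kfin k x mB).1 [in RHS](kfin k' x mB).1 -EFinB.
by [].
Qed.

Lemma approx_conv (k : R.-pker X ~> X) (kl : L -> R.-pker X ~> X)
  (hc : onesided_cvg p le kl k) (phi : X -> R) :
  measurable_fun setT phi -> (forall y, 0 <= phi y <= 1) ->
  forall eps : R, 0 < eps -> exists l0, forall l, le l0 l ->
  (\int[p]_x (`|fine (\int[k x]_y (phi y)%:E)%E - fine (\int[kl l x]_y (phi y)%:E)%E|)%:E
     <= eps%:E)%E.
Proof.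
move=> mphi phi01 eps e0.
set n := (Num.truncn (2 / eps)).+1.
have n0 : (0 < n)%N by [].
have n0R : (0 : R) < n%:R by rewrite ltr0n.
have hn : n%:R^-1 <= eps / 2.
  have := truncnS_gt (2 / eps); rewrite -/n => h.
  have h' : 2 < n%:R * eps.
    have -> : (2:R) = (2 / eps) * eps by rewrite divfK // gt_eqF.
    by rewrite ltr_pM2r.
  have u0 : 0 < n%:R^-1 :> R by rewrite invr_gt0.
  have un : n%:R^-1 * n%:R = 1 :> R by rewrite mulVf // gt_eqF.
  move: u0 un h'; set u := n%:R^-1; set m := n%:R; move=> u0 un h'.
  nra.
have [l0 Hl0] := ev_fin dir (P := fun j l =>
   (\int[p]_x `|(k x (Bset n phi j) - kl l x (Bset n phi j))%E| < (eps / 2)%:E)%E)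
  (n := n) (fun j _ => hc _ (mBset n j mphi) (eps / 2) (divr_gt0 e0 (ltr0Sn R 1))).
exists l0 => l ll.
have mphiE : measurable_fun setT (fun y => (phi y)%:E) by apply/measurable_EFinP.
have phiE0 y : (0 <= (phi y)%:E)%E by rewrite lee_fin; have /andP[] := phi01 y.
pose g x := n%:R^-1 + \sum_(j < n) n%:R^-1 *
     `|fine (k x (Bset n phi j)) - fine (kl l x (Bset n phi j))|.
have mterm j : measurable_fun setT (fun x => n%:R^-1 *
     `|fine (k x (Bset n phi j)) - fine (kl l x (Bset n phi j))|).
  apply: measurable_funM => //; apply: measurableT_comp; first exact: normr_measurable.
  by apply: measurable_funB; apply: mfk; exact: mBset.
have term0 j x : 0 <= n%:R^-1 *
     `|fine (k x (Bset n phi j)) - fine (kl l x (Bset n phi j))|.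
  by rewrite mulr_ge0// invr_ge0.
apply: (@le_trans _ _ (\int[p]_x (g x)%:E)%E).
  have m1 : measurable_fun setT (fun x => (`|fine (\int[k x]_y (phi y)%:E)%E -
        fine (\int[kl l x]_y (phi y)%:E)%E|)%:E).
    apply/measurable_EFinP; apply: measurableT_comp; first exact: normr_measurable.
    by apply: measurable_funB; apply: mfint.
  have m2 : measurable_fun setT (fun x => (g x)%:E).
    apply/measurable_EFinP; apply: measurable_funD => //.
    exact: measurable_sum.
  apply: (ge0_le_integral _ measurableT _ m1 m2).
    by move=> x _; rewrite lee_fin.
  move=> x _; rewrite lee_fin /g; apply: approx_diff => //; exact: prob_kernel.
rewrite /g.
under eq_integral => x _ do rewrite EFinD.
rewrite ge0_integralD; last 5 first.
- by [].
- by move=> x _; rewrite lee_fin invr_ge0.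
- exact: measurable_cst.
- by move=> x _; rewrite lee_fin; apply: sumr_ge0 => j _.
- by apply/measurable_EFinP; exact: measurable_sum.
have p1 : p setT = 1%E := probability_setT p.
rewrite integral_cst//.
rewrite (_ : ((n%:R^-1)%:E * _)%E = (n%:R^-1)%:E); last first.
  by rewrite -[RHS]mule1; congr (_ * _)%E; exact: probability_setT.
under eq_integral => x _ do rewrite -sumEFin.
rewrite ge0_integral_sum; last 3 first.
- by [].
- by move=> j; apply/measurable_EFinP.
- by move=> j x _; rewrite lee_fin.
apply: (@le_trans _ _ ((n%:R^-1)%:E + \sum_(j < n) (n%:R^-1 * (eps / 2))%:E)%E).
  apply: leeD2l; apply: lee_sum => j _.
  under eq_integral => x _ do rewrite EFinM.
  rewrite ge0_integralZl; last 4 first.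
  - by [].
  - apply/measurable_EFinP; apply: measurableT_comp; first exact: normr_measurable.
    by apply: measurable_funB; apply: mfk; exact: mBset.
  - by move=> x _; rewrite lee_fin.
  - by rewrite lee_fin invr_ge0.
  rewrite EFinM; apply: lee_pmul;
    [by rewrite lee_fin invr_ge0 | by apply: integral_ge0 => x _; rewrite lee_fin | by [] | ].
  under eq_integral => x _ do rewrite (absfine k (kl l) x (mBset n j mphi)).
  by apply: ltW; apply: Hl0.
rewrite sumEFin -EFinD lee_fin sumr_const card_ord.
have E : forall c : R, c *+ n = n%:R * c by move=> c; rewrite mulr_natl.
rewrite (E (n%:R^-1 * (eps / 2))) mulrA mulfV ?gt_eqF// mul1r.
lra.
Qed.
End conv.


Section mp.
Context (R : realType) (d : measure_display) (X : measurableType d)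
  (p : probability X R) (k : R.-pker X ~> X) (mp : kmeasure_preserving p k).
Local Open Scope ereal_scope.

Let int_indic E (mE : measurable E) :
  \int[p]_z (\1_E z)%:E = \int[p]_y (\int[k y]_z (\1_E z)%:E).
Proof.
rewrite integral_indic// setIT.
rewrite (_ : \int[p]_y _ = \int[p]_y k y E); last first.
  by apply: eq_integral => y _; rewrite integral_indic// setIT.
by apply/esym; exact: mp.
Qed.

Import HBNNSimple.

Let int_nnsfun (f : {nnsfun X >-> R}) :
  \int[p]_z (f z)%:E = \int[p]_y (\int[k y]_z (f z)%:E).
Proof.
under [in LHS]eq_integral do rewrite fimfunE -fsumEFin//.
rewrite ge0_integral_fsum//; last 2 first.
  - by move=> r; exact/measurable_EFinP/measurableT_comp.
  - by move=> r z _; rewrite EFinM nnfun_muleindic_ge0.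
under [in RHS]eq_integral.
  move=> y _.
  under eq_integral.
    by move=> z _; rewrite fimfunE -fsumEFin//; over.
  rewrite /= ge0_integral_fsum//; last 2 first.
    - by move=> r; exact/measurable_EFinP/measurableT_comp.
    - by move=> r z _; rewrite EFinM nnfun_muleindic_ge0.
  under eq_fsbigr.
    move=> r _.
    rewrite (integralZl_indic _ (fun r => f @^-1` [set r]))//; last first.
      by move=> r0; rewrite preimage_nnfun0.
    rewrite integral_indic// setIT.
    over.
  over.
rewrite /= ge0_integral_fsum//; last 2 first.
  - move=> r; apply: measurable_funeM.
    exact: measurable_kernel.
  - move=> n y _.
    have := mulemu_ge0 (fun n => f @^-1` [set n]).
    by apply; exact: preimage_nnfun0.
apply: eq_fsbigr => r _.
rewrite (integralZl_indic _ (fun r => f @^-1` [set r]))//; last first.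
  exact: preimage_nnfun0.
rewrite /= int_indic//.
have [r0|r0] := leP 0%R r.
  rewrite ge0_integralZl//.
    by congr (_ * _); apply: eq_integral => y _; rewrite integral_indic// setIT.
  exact: measurable_kernel.
rewrite integral0_eq ?mule0.
  by rewrite integral0_eq// => y _; rewrite preimage_nnfun0// measure0 mule0.
by move=> y _; rewrite integral0_eq// => z _; rewrite preimage_nnfun0// indic0.
Qed.

Lemma int_mp f : (forall z, 0 <= f z) -> measurable_fun [set: X] f ->
  \int[p]_z f z = \int[p]_y (\int[k y]_z f z).
Proof.
move=> f0 mf.
pose f_ := nnsfun_approx measurableT mf.
transitivity (\int[p]_z (lim ((f_ n z)%:E @[n --> \oo]))).
  by apply/eq_integral => z _; apply/esym/cvg_lim => //=; exact: cvg_nnsfun_approx.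
rewrite monotone_convergence//; last 3 first.
  by move=> n; exact/measurable_EFinP.
  by move=> n z _; rewrite lee_fin.
  by move=> z _ a b ab; rewrite lee_fin; exact/lefP/nd_nnsfun_approx.
rewrite (_ : (fun _ => _) =
    (fun n => \int[p]_y (\int[k y]_z (f_ n z)%:E)))//; last first.
  by apply/funext => n; rewrite int_nnsfun.
transitivity (\int[p]_y lim ((\int[k y]_z (f_ n z)%:E) @[n --> \oo])).
  rewrite -monotone_convergence//; last 3 first.
  - move=> n; apply: measurable_fun_integral_kernel => //.
    + by move=> U mU; exact: measurable_kernel.
    + by move=> z; rewrite lee_fin.
    + exact/measurable_EFinP.
  - by move=> n y _; apply: integral_ge0 => // z _; rewrite lee_fin.
  - move=> y _ a b ab; apply: ge0_le_integral => //.
    + by move=> z _; rewrite lee_fin.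
    + exact/measurable_EFinP.
    + exact/measurable_EFinP.
    + by move=> z _; rewrite lee_fin; exact/lefP/nd_nnsfun_approx.
apply: eq_integral => y _; rewrite -monotone_convergence//; last 3 first.
  - by move=> n; exact/measurable_EFinP.
  - by move=> n z _; rewrite lee_fin.
  - by move=> z _ a b ab; rewrite lee_fin; exact/lefP/nd_nnsfun_approx.
by apply: eq_integral => z _; apply/cvg_lim => //; exact: cvg_nnsfun_approx.
Qed.

End mp.


Section absint.
Context (R : realType) (d : measure_display) (X : measurableType d).

Lemma intfin (mu : {measure set X -> \bar R}) (mu1 : mu setT = 1%E) (phi : X -> R) :
  measurable_fun setT phi -> (forall y, 0 <= phi y <= 1) ->
  (\int[mu]_y (phi y)%:E)%E = (fine (\int[mu]_y (phi y)%:E)%E)%:E.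
Proof. by move=> mphi phi01; have [] := approx_meas mu1 (n := 1) mphi phi01 isT. Qed.

Lemma absint (mu : {measure set X -> \bar R}) (mu1 : mu setT = 1%E) (phi psi : X -> R) :
  measurable_fun setT phi -> (forall y, 0 <= phi y <= 1) ->
  measurable_fun setT psi -> (forall y, 0 <= psi y <= 1) ->
  ((`|fine (\int[mu]_y (phi y)%:E)%E - fine (\int[mu]_y (psi y)%:E)%E|)%:E <=
    \int[mu]_y (`|phi y - psi y|)%:E)%E.
Proof.
move=> mphi phi01 mpsi psi01.
have mD : measurable_fun setT (fun y => `|phi y - psi y|).
  apply: measurableT_comp; first exact: normr_measurable.
  exact: measurable_funB.
have D01 y : 0 <= `|phi y - psi y| <= 1.
  have /andP[? ?] := phi01 y; have /andP[? ?] := psi01 y.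
  rewrite normr_ge0 /=; rewrite ler_norml; apply/andP; split; lra.
have eD := intfin mu1 mD D01.
have ephi := intfin mu1 mphi phi01.
have epsi := intfin mu1 mpsi psi01.
have key (u v : X -> R) : measurable_fun setT u -> measurable_fun setT v ->
    (forall y, 0 <= u y) -> (forall y, 0 <= v y) ->
    (forall y, u y <= v y + `|phi y - psi y|) ->
    (\int[mu]_y (u y)%:E <= \int[mu]_y (v y)%:E + \int[mu]_y (`|phi y - psi y|)%:E)%E.
  move=> mu_ mv u0 v0 uv.
  rewrite -ge0_integralD; last 5 first.
  - by [].
  - by move=> y _; rewrite lee_fin.
  - exact/measurable_EFinP.
  - by move=> y _; rewrite lee_fin.
  - exact/measurable_EFinP.
  apply: ge0_le_integral.
  - by [].
  - by move=> y _; rewrite lee_fin.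
  - exact/measurable_EFinP.
  - by apply: emeasurable_funD; exact/measurable_EFinP.
  - by move=> y _; rewrite -EFinD lee_fin.
have t1 y : phi y <= psi y + `|phi y - psi y|.
  by have := ler_norm (phi y - psi y); lra.
have t2 y : psi y <= phi y + `|phi y - psi y|.
  by have := ler_norm (psi y - phi y); rewrite distrC; lra.
have p0 y : 0 <= phi y by have /andP[] := phi01 y.
have q0 y : 0 <= psi y by have /andP[] := psi01 y.
have k1 := key phi psi mphi mpsi p0 q0 t1.
have k2 := key psi phi mpsi mphi q0 p0 t2.
move: k1 k2; rewrite ephi epsi eD -!EFinD !lee_fin => k1 k2.
rewrite ler_norml; apply/andP; split; lra.
Qed.
End absint.


Section main.
Context (R : realType) (d : measure_display) (X : measurableType d)
  (p : probability X R) (L : Type) (le : L -> L -> Prop) (dir : directed_set le).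

Lemma main_lemma (h k g : R.-pker X ~> X) (hl kl gl : L -> R.-pker X ~> X) :
  (forall l, kmeasure_preserving p (kl l)) ->
  onesided_cvg p le hl h -> onesided_cvg p le kl k -> onesided_cvg p le gl g ->
  (forall l, kae_eq p (kcompose (hl l) (kl l)) (fun x C => gl l x C)) ->
  kae_eq p (kcompose h k) (fun x C => g x C).
Proof.
move=> mpl ch ck cg H C mC; rewrite /kcompose.
pose hr y := fine (h y C).
pose gr x := fine (g x C).
have mhr : measurable_fun setT hr by exact: mfk.
have hr01 y : 0 <= hr y <= 1 by exact: (kfin h y mC).2.
have mhrE : measurable_fun setT (fun y => (hr y)%:E) by apply/measurable_EFinP.
have hrE0 y : (0 <= (hr y)%:E)%E by rewrite lee_fin; have /andP[] := hr01 y.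
pose a x := fine (\int[k x]_y (hr y)%:E)%E.
have ma : measurable_fun setT a by exact: mfint.
have mgr : measurable_fun setT gr by exact: mfk.
have eA x : (\int[k x]_y h y C)%E = (a x)%:E.
  rewrite -intfin//; last exact: prob_kernel.
  by apply: eq_integral => y _; rewrite (kfin h y mC).1.
have eG x : g x C = (gr x)%:E by rewrite (kfin g x mC).1.
have mf : measurable_fun setT (fun x => (a x - gr x)%:E).
  by apply/measurable_EFinP; exact: measurable_funB.
suff I0 : (\int[p]_x `|(a x - gr x)%:E| = 0)%E.
  have := (ae_eq_integral_abs p measurableT mf).1 I0.
  apply: filterS => x /(_ I) /= E0.
  rewrite eA eG; congr (_%:E); apply/eqP; rewrite -subr_eq0; apply/eqP.
  by case: E0.
apply/eqP; rewrite eq_le; apply/andP; split; last first.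
  by apply: integral_ge0 => x _; exact: abse_ge0.
apply/lee_addgt0Pr => e e0; rewrite add0e.
pose eps := e / 4.
have eps0 : 0 < eps by rewrite divr_gt0.
have [l0 Hl] := ev2 dir (approx_conv dir ck mhr hr01 eps0)
  (ev2 dir (ch C mC eps eps0) (cg C mC eps eps0)).
have refl : forall l, le l l by case: dir.
have [A [B Cc]] := Hl l0 (refl l0).
move: A B Cc; set l := l0 => A B Cc.
pose hlr y := fine (hl l y C).
have mhlr : measurable_fun setT hlr by exact: mfk.
have hlr01 y : 0 <= hlr y <= 1 by exact: (kfin (hl l) y mC).2.
have mhlrE : measurable_fun setT (fun y => (hlr y)%:E) by apply/measurable_EFinP.
have hlrE0 y : (0 <= (hlr y)%:E)%E by rewrite lee_fin; have /andP[] := hlr01 y.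
pose a' x := fine (\int[kl l x]_y (hr y)%:E)%E.
pose al x := fine (\int[kl l x]_y (hlr y)%:E)%E.
pose glr x := fine (gl l x C).
have ma' : measurable_fun setT a' by exact: mfint.
have mal : measurable_fun setT al by exact: mfint.
have mglr : measurable_fun setT glr by exact: mfk.
pose t1 x := `|a x - a' x|.
pose t2 x := `|a' x - al x|.
pose t3 x := `|al x - glr x|.
pose t4 x := `|glr x - gr x|.
have mN (u v : X -> R) : measurable_fun setT u -> measurable_fun setT v ->
    measurable_fun setT (fun x => `|u x - v x|).
  move=> mu_ mv; apply: measurableT_comp; first exact: normr_measurable.
  exact: measurable_funB.
have mt1 : measurable_fun setT (fun x => (t1 x)%:E) by apply/measurable_EFinP; exact: mN.
have mt2 : measurable_fun setT (fun x => (t2 x)%:E) by apply/measurable_EFinP; exact: mN.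
have mt3 : measurable_fun setT (fun x => (t3 x)%:E) by apply/measurable_EFinP; exact: mN.
have mt4 : measurable_fun setT (fun x => (t4 x)%:E) by apply/measurable_EFinP; exact: mN.
have nt1 x : (0 <= (t1 x)%:E)%E by rewrite lee_fin /t1.
have nt2 x : (0 <= (t2 x)%:E)%E by rewrite lee_fin /t2.
have nt3 x : (0 <= (t3 x)%:E)%E by rewrite lee_fin /t3.
have nt4 x : (0 <= (t4 x)%:E)%E by rewrite lee_fin /t4.
apply: (@le_trans _ _ (\int[p]_x ((t1 x)%:E + (t2 x)%:E + (t3 x)%:E + (t4 x)%:E))%E).
  have mL : measurable_fun setT (fun x => `|(a x - gr x)%:E|%E).
    by apply: measurableT_comp; [exact: abse_measurable | exact: mf].
  have mR : measurable_fun setT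
      (fun x => ((t1 x)%:E + (t2 x)%:E + (t3 x)%:E + (t4 x)%:E)%E).
    by do 3 apply: emeasurable_funD => //.
  apply: (ge0_le_integral _ measurableT _ mL mR).
    by move=> x _; exact: abse_ge0.
  move=> x _ /=; rewrite -!EFinD lee_fin.
  have d1 := ler_distD (a' x) (a x) (gr x).
  have d2 := ler_distD (al x) (a' x) (gr x).
  have d3 := ler_distD (glr x) (al x) (gr x).
  rewrite /t1 /t2 /t3 /t4; lra.
rewrite ge0_integralD; last 5 first.
- by [].
- by move=> x _; rewrite !adde_ge0.
- by do 2 apply: emeasurable_funD => //.
- by move=> x _.
- by [].
rewrite ge0_integralD; last 5 first.
- by [].
- by move=> x _; rewrite !adde_ge0.
- by apply: emeasurable_funD => //.
- by move=> x _.
- by [].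
rewrite ge0_integralD; last 5 first.
- by [].
- by move=> x _.
- by [].
- by move=> x _.
- by [].
have b1 : (\int[p]_x (t1 x)%:E <= eps%:E)%E by exact: A.
have b4 : (\int[p]_x (t4 x)%:E <= eps%:E)%E.
  apply: ltW; apply: le_lt_trans Cc; rewrite le_eqVlt; apply/orP; left; apply/eqP.
  apply: eq_integral => x _; rewrite /t4 distrC /glr /gr.
  exact: absfine.
have b3 : (\int[p]_x (t3 x)%:E = 0)%E.
  transitivity (\int[p]_x (cst 0%E x))%E; last by rewrite integral0.
  apply: (ae_eq_integral (cst 0%E) _ measurableT mt3 (measurable_cst _)).
  apply: filterS (H l C mC) => x /= Hx _.
  rewrite /t3 /al /glr /kcompose in Hx *.
  rewrite (_ : (\int[kl l x]_y (hlr y)%:E)%E = (\int[kl l x]_y hl l y C)%E).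
    by rewrite Hx subrr normr0.
  by apply: eq_integral => y _; rewrite /hlr -(kfin (hl l) y mC).1.
have b2 : (\int[p]_x (t2 x)%:E <= eps%:E)%E.
  apply: (@le_trans _ _ (\int[p]_x (\int[kl l x]_y (`|hr y - hlr y|)%:E))%E).
    have mhh : measurable_fun setT (fun y => `|hr y - hlr y|) by exact: mN.
    have mR : measurable_fun setT (fun x => \int[kl l x]_y (`|hr y - hlr y|)%:E)%E.
      by apply: mint; [move=> y; rewrite lee_fin | exact/measurable_EFinP].
    apply: (ge0_le_integral _ measurableT _ mt2 mR); first by move=> x _; exact: nt2.
    move=> x _; rewrite /t2 /a' /al; apply: absint => //; exact: prob_kernel.
  rewrite -(int_mp (mpl l) (f := fun y => (`|hr y - hlr y|)%:E)); last 2 first.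
  - by move=> y; rewrite lee_fin.
  - by apply/measurable_EFinP; exact: mN.
  apply: ltW; apply: le_lt_trans B; rewrite le_eqVlt; apply/orP; left; apply/eqP.
  apply: eq_integral => x _; rewrite /hr /hlr.
  exact: absfine.
rewrite b3 adde0.
apply: (@le_trans _ _ (eps%:E + eps%:E + eps%:E)%E).
  by apply: leeD; [apply: leeD|].
rewrite -!EFinD lee_fin /eps; lra.
Qed.
End main.

Theorem proposition5p11 (R : realType) (d : measure_display) (X : measurableType d)
  (p : probability X R) (L : Type) (le : L -> L -> Prop)
  (e_ f_ : L -> R.-pker X ~> X) (e f : R.-pker X ~> X) :
  standard_borel R X ->
  directed_set le ->
  (forall l, kmeasure_preserving p (e_ l)) ->
  (forall l, kmeasure_preserving p (f_ l)) ->
  (forall l, kidempotent p (e_ l)) ->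
  (forall l, kidempotent p (f_ l)) ->
  onesided_cvg p le e_ e ->
  onesided_cvg p le f_ f ->
  (forall l, kle p (e_ l) (f_ l)) ->
  kle p e f.
Proof.
move=> _ dir mpe mpf _ _ ce cf H; split.
- exact: (main_lemma dir mpf ce cf ce (fun l => (H l).1)).
- exact: (main_lemma dir mpe cf ce ce (fun l => (H l).2)).
Qed.
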